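(* Suppose that a domino, with holes $H_1$, $H_2$ and edge $xy$, is the underlying graph of some oriented graph $G$ derived from a Burling tree $(T,r,\ell,c)$. Then there exist $z\in\{x,y\}$ and $i\in\{1,2\}$ such that $z$ is the pivot of $H_i$ and $z$ is a subordinate vertex of $H_{3-i}$.
   Context: Graphs are finite, without loops or multiple edges; oriented graphs have no pair of opposite arcs. A hole is an induced cycle of length at least $4$. A domino is a graph made of an edge $xy$ and two holes $H_1,H_2$ both containing the edge $xy$, such that $V(H_1)\cap V(H_2)=\{x,y\}$ and there are no edges other than those of $H_1$ and $H_2$. In a rooted tree $T$ with root $r$, each non-root vertex $v$ has a parent $p(v)$; children, leaves, ancestors and descendants are as usual. A branch is a sequence $v_1\dots v_k$ ($k\ge0$) with $v_i$ the parent of $v_{i+1}$; it starts at $v_1$. A Burling tree is a 4-tuple $(T,r,\ell,c)$: $T$ a rooted tree with root $r$; $\ell$ assigns to each non-leaf vertex $v$ one of its children $\ell(v)$ (the last-born of $v$); $c$ assigns to every vertex $v$ that is neither the root nor a last-born the vertex-set of a (possibly empty) branch starting at $\ell(p(v))$, and $c(v)=\emptyset$ if $v$ is the root or a last-born. The oriented graph fully derived from it has vertex-set $V(T)$ and an arc $uv$ iff $v\in c(u)$; an oriented graph is derived from the Burling tree if it is an induced subgraph of the fully derived one. A hole of an oriented graph means a hole of its underlying graph. If $G$ is derived from $T$ and $H$ is a hole of $G$, then (as established in the paper) $H$ with the inherited orientation has exactly two sources, called its antennas, and exactly two sinks; exactly one of these sinks is adjacent to both antennas and is an ancestor in $T$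 of all vertices of $H$ other than the antennas: it is the pivot of $H$. A vertex of $H$ is subordinate if it is neither the pivot nor an antenna of $H$. *)

(* Defs.v *)
From mathcomp Require Import all_boot.
Set Implicit Arguments. Unset Strict Implicit. Unset Printing Implicit Defensive.

Section Burling.
Variable T : finType.

Definition rooted_tree (r : T) (par : T -> T) : Prop :=
  par r = r /\ (forall v, v != r -> par v != v) /\
  (forall v, exists k, iter k par v = r).

Definition is_child (r : T) (par : T -> T) (v u : T) : bool :=
  (u != r) && (par u == v).

Definition is_leaf (r : T) (par : T -> T) (v : T) : bool :=
  [forall u, ~~ is_child r par v u].

Definition ancestor (par : T -> T) (u v : T) : Prop :=
  exists k, iter k par v = u.

Definition branch_from (r : T) (par : T -> T) (a : T) (s : seq T) : Prop :=
  match s with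
  | [::] => True
  | b :: s' => b = a /\ path (fun u w => is_child r par u w) b s'
  end.

Definition last_born (r : T) (par l : T -> T) (v : T) : bool :=
  (v != r) && (l (par v) == v).

Definition burling_tree (r : T) (par l : T -> T) (c : T -> {set T}) : Prop :=
  rooted_tree r par /\
  (forall v, ~~ is_leaf r par v -> is_child r par v (l v)) /\
  (forall v, (v == r) || last_born r par l v -> c v = set0) /\
  (forall v, v != r -> ~~ last_born r par l v ->
     exists s, branch_from r par (l (par v)) s /\ c v = [set x in s]).

(* arcs of the oriented graph derived from the Burling tree, induced on S *)
Definition arc (S : {set T}) (c : T -> {set T}) (u v : T) : bool :=
  [&& u \in S, v \in S & v \in c u].

Definition adj (S : {set T}) (c : T -> {set T}) (u v : T) : bool :=
  arc S c u v || arc S c v u.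

(* H (listed in cyclic order) is a hole of the graph with adjacency e:
   an induced cycle of length at least 4 *)
Definition hole (e : rel T) (H : seq T) : Prop :=
  uniq H /\ 4 <= size H /\
  {in H &, forall a b, e a b = (b == next H a) || (a == next H b)}.

Definition domino (S : {set T}) (e : rel T) (H1 H2 : seq T) (x y : T) : Prop :=
  hole e H1 /\ hole e H2 /\
  x != y /\ e x y /\
  (forall v, v \in H1 -> v \in H2 -> (v == x) || (v == y)) /\
  x \in H1 /\ y \in H1 /\ x \in H2 /\ y \in H2 /\
  S = [set v | (v \in H1) || (v \in H2)] /\
  (forall a b, a \in S -> b \in S -> e a b ->
     ((a \in H1) && (b \in H1)) || ((a \in H2) && (b \in H2))).

Definition antenna (S : {set T}) (c : T -> {set T}) (H : seq T) (v : T) : bool :=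
  (v \in H) && [forall w, (w \in H) ==> ~~ arc S c w v].

Definition sink (S : {set T}) (c : T -> {set T}) (H : seq T) (v : T) : bool :=
  (v \in H) && [forall w, (w \in H) ==> ~~ arc S c v w].

Definition pivot (par : T -> T) (S : {set T}) (c : T -> {set T})
    (H : seq T) (z : T) : Prop :=
  sink S c H z /\
  (forall a, antenna S c H a -> adj S c z a) /\
  (forall w, w \in H -> ~~ antenna S c H w -> ancestor par z w).

Definition subordinate (par : T -> T) (S : {set T}) (c : T -> {set T})
    (H : seq T) (v : T) : Prop :=
  v \in H /\ ~ pivot par S c H v /\ ~~ antenna S c H v.

End Burling.

(* Main.v *)
Require Import Defs.
From mathcomp Require Import all_boot.
From Stdlib Require Import Classical.
Set Implicit Arguments. Unset Strict Implicit. Unset Printing Implicit Defensive.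

Section Aux.
Variables (T : finType) (r : T) (par l : T -> T) (c : T -> {set T}).
Hypothesis Hb : burling_tree r par l c.
Local Notation anc := (ancestor par).

Lemma Hpr : par r = r. Proof. by case: Hb => [[]]. Qed.
Lemma Hpv v : v != r -> par v != v. Proof. by case: Hb => [[_ [H _]] _]; apply: H. Qed.
Lemma ex_root v : exists k, iter k par v == r.
Proof. case: Hb => [[_ [_ H]] _]; have [k Hk] := H v; by exists k; apply/eqP. Qed.
Definition depth v := ex_minn (ex_root v).

Lemma anc_refl a : anc a a. Proof. by exists 0. Qed.
Lemma anc_par v : anc (par v) v. Proof. by exists 1. Qed.
Lemma anc_trans a b d : anc a b -> anc b d -> anc a d.
Proof. by move=> [i <-] [j <-]; exists (i + j); rewrite iterD. Qed.
Lemma anc_up a b : anc a b -> a != b -> anc a (par b).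
Proof.
move=> [[|k] <-]; first by rewrite eqxx.
by move=> _; exists k; rewrite iterSr.
Qed.
Lemma anc_chain a b x : anc a x -> anc b x -> anc a b \/ anc b a.
Proof.
move=> [i <-] [j <-]; case: (leqP i j) => h.
  right; exists (j - i); by rewrite -iterD subnK.
left; exists (i - j); by rewrite -iterD subnK // ltnW.
Qed.

Lemma iter_r n : iter n par r = r. Proof. exact: iter_fix Hpr. Qed.

Lemma depth_r v : iter (depth v) par v = r.
Proof. rewrite /depth; by case: ex_minnP => m /eqP. Qed.
Lemma depth_min v k : iter k par v = r -> depth v <= k.
Proof. rewrite /depth; case: ex_minnP => m _ H E; apply: H; by rewrite E. Qed.

Lemma anc_depth a b : anc a b -> a != b -> depth a < depth b.
Proof.
move=> [k Ek] ab; have k0 : 0 < k by case: k Ek => [|k] // E; move: ab; rewrite -E /= eqxx.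
case: (leqP k (depth b)) => hk.
  have : iter (depth b - k) par a = r by rewrite -Ek -iterD subnK // depth_r.
  move/depth_min => h; apply: (leq_ltn_trans h); rewrite ltn_subrL k0 /=.
  by apply: (leq_trans k0).
have ar : a = r by rewrite -Ek -(subnK (ltnW hk)) iterD depth_r iter_r.
have : depth a <= 0 by apply: depth_min; rewrite ar.
rewrite leqn0 => /eqP ->; rewrite lt0n; apply/negP => /eqP d0.
have br : b = r by move: (depth_r b); rewrite d0.
by rewrite ar br eqxx in ab.
Qed.

Lemma anc_anti a b : anc a b -> anc b a -> a = b.
Proof.
move=> h1 h2; apply/eqP/negPn/negP => ab.
have := anc_depth h1 ab; have := anc_depth h2; rewrite eq_sym => /(_ ab) h3 h4.
by move: (ltn_trans h3 h4); rewrite ltnn.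
Qed.

Lemma sib_nanc a b : par a = par b -> a != b -> a != r -> ~ anc a b.
Proof.
move=> pab ab ar h; have := anc_up h ab; rewrite -pab => h2.
have := anc_anti h2 (anc_par a) => /esym E; by move: (Hpv ar); rewrite E eqxx.
Qed.


Lemma path_anc b s : path (is_child r par) b s -> forall x, x \in b :: s -> anc b x.
Proof.
elim: s b => [|b2 s IH] b /=.
  by move=> _ x; rewrite inE => /eqP ->; apply: anc_refl.
move=> /andP [/andP [_ /eqP pb] hp] x; rewrite inE => /orP [/eqP ->|xs].
  exact: anc_refl.
by apply: anc_trans (IH _ hp _ xs); rewrite -pb; apply: anc_par.
Qed.

Lemma path_int b s : path (is_child r par) b s ->
  forall x t, x \in b :: s -> anc t x -> anc b t -> t \in b :: s.
Proof.
elim: s b => [|b2 s IH] b /=.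
  by move=> _ x t; rewrite inE => /eqP -> h1 h2; rewrite (anc_anti h1 h2) inE eqxx.
move=> /andP [/andP [_ /eqP pb] hp] x t; rewrite inE => /orP [/eqP ->|xs] h1 h2.
  by rewrite (anc_anti h1 h2) inE eqxx.
case: (t =P b) => [->|tb]; first by rewrite inE eqxx.
rewrite inE; apply/orP; right; apply: (IH _ hp x) => //.
have := path_anc hp xs => h3; case: (anc_chain h1 h3) => // h4.
case: (t =P b2) => [->|tb2]; first exact: anc_refl.
have := anc_up h4 (introN eqP tb2); rewrite pb => h5.
by case: tb; apply: anc_anti.
Qed.

Lemma path_cmp b s : path (is_child r par) b s ->
  forall x y, x \in b :: s -> y \in b :: s -> anc x y \/ anc y x.
Proof.
elim: s b => [|b2 s IH] b /=.
  by move=> _ x y; rewrite !inE => /eqP -> /eqP ->; left; apply: anc_refl.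
move=> hp0 x y; have /andP [_ hp] := hp0; rewrite in_cons => /orP [/eqP ->|xs].
  by move=> ys; left; apply: (@path_anc b (b2 :: s) hp0).
rewrite in_cons => /orP [/eqP ->|ys]; last exact: (IH b2 hp x y xs ys).
by right; apply: (@path_anc b (b2 :: s) hp0); rewrite in_cons xs orbT.
Qed.

Lemma br_anc a s x : branch_from r par a s -> x \in s -> anc a x.
Proof. case: s => // b s [-> hp]; exact: path_anc. Qed.
Lemma br_int a s x t : branch_from r par a s -> x \in s -> anc t x -> anc a t -> t \in s.
Proof. case: s => // b s [-> hp]; exact: path_int. Qed.
Lemma br_cmp a s x y : branch_from r par a s -> x \in s -> y \in s -> anc x y \/ anc y x.
Proof. case: s => // b s [-> hp]; exact: path_cmp. Qed.

Variable S : {set T}.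
Local Notation ar := (Defs.arc S c).
Local Notation e := (adj S c).

Lemma arc_S u v : ar u v -> u \in S /\ v \in S.
Proof. by case/and3P. Qed.
Lemma adj_S u v : e u v -> u \in S /\ v \in S.
Proof. by case/orP => /arc_S [] . Qed.
Lemma adjC u v : e u v = e v u.
Proof. by rewrite /adj orbC. Qed.

Lemma arc_info u v : ar u v -> [/\ u != r, l (par u) != u, par (l (par u)) = par u,
  l (par u) != r & exists s, [/\ branch_from r par (l (par u)) s, c u = [set x in s] & v \in s]].
Proof.
move=> /and3P [uS vS vc].
case: Hb => _ [Hl [Hc0 Hc]].
have nr : ~~ ((u == r) || last_born r par l u).
  by apply/negP => /Hc0 E; rewrite E in_set0 in vc.
move: nr; rewrite negb_or => /andP [ur nlb].
have [s [bs cs]] := Hc u ur nlb.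
have lu : l (par u) != u by move: nlb; rewrite /last_born ur.
have nl : ~~ is_leaf r par (par u).
  by apply/forallPn; exists u; rewrite negbK /is_child ur eqxx.
move: (Hl _ nl); rewrite /is_child => /andP [lr /eqP pl].
split => //; exists s; split => //; by rewrite cs inE in vc.
Qed.

Lemma arc_nanc u v : ar u v -> ~ anc u v /\ ~ anc v u.
Proof.
move=> /arc_info [ur lu pl lr [s [bs _ vs]]].
have h := br_anc bs vs; split => h2.
  case: (anc_chain h2 h) => h3.
    by apply: (sib_nanc (esym pl) _ ur h3); rewrite eq_sym.
  exact: (sib_nanc pl lu lr h3).
apply: (sib_nanc pl lu lr); exact: anc_trans h h2.
Qed.

Lemma adj_nanc u v : e u v -> ~ anc u v /\ ~ anc v u.
Proof. by case/orP => /arc_nanc [] . Qed.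

Lemma arc_anc u v : ar u v -> anc (l (par u)) v.
Proof. by move=> /arc_info [_ _ _ _ [s [bs _ vs]]]; apply: br_anc bs vs. Qed.

Lemma arc_par u v : ar u v -> anc (par u) v.
Proof.
move=> h; apply: anc_trans (arc_anc h).
have [_ _ pl _ _] := arc_info h; rewrite -{1}pl; exact: anc_par.
Qed.

Lemma cross t u w : t \in S -> e u w -> anc t u -> ~ anc t w ->
  u = t \/ (ar w t /\ ar w u).
Proof.
move=> tS /orP [h|h] htu htw.
  case: (u =P t) => [|ut]; [by left|exfalso; apply: htw].
  have h1 : anc t (par u) by apply: anc_up => //; rewrite eq_sym; apply/eqP.
  exact: anc_trans h1 (arc_par h).
right; split => //.
have [wr lw pl lr [s [bs cs us]]] := arc_info h.
have hL := br_anc bs us.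
have [h2|h2] : anc (l (par w)) t \/ (anc t (l (par w)) /\ t != l (par w)).
  case: (anc_chain hL htu) => h2; first by left.
  case: (t =P l (par w)) => [E|tl]; last by right; split => //; apply/eqP.
  by left; rewrite -E; apply: anc_refl.
  have ts := br_int bs us htu h2.
  have [wS _] := arc_S h; by rewrite /Defs.arc wS tS cs inE ts.
case: h2 => h2 tl.
exfalso; apply: htw; have := anc_up h2 tl; rewrite pl => h3.
exact: anc_trans h3 (anc_par w).
Qed.

Lemma prop t u w : t \in S -> e u w -> anc t u -> u != t -> ~~ ar w t -> anc t w.
Proof.
move=> tS euw htu ut nwt; apply: NNPP => htw.
case: (cross tS euw htu htw) => [E|[h _]]; [by rewrite E eqxx in ut|by rewrite h in nwt].
Qed.

Lemma asym u v : ar u v -> ~~ ar v u.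
Proof.
move=> huv; apply/negP => hvu.
have [nuv nvu] := arc_nanc huv.
have [ur lu pl lr _] := arc_info huv.
have [vr lv pl' lr' _] := arc_info hvu.
have h1 := arc_par huv. have h2 := arc_par hvu.
have E : par u = par v.
  case: (anc_chain (anc_par u) h2) => h3.
    have pv : par v != u by apply/eqP => E; apply: nuv; rewrite -E; apply: anc_par.
    exact: anc_anti h3 (anc_up h2 pv).
  have pu : par u != v by apply/eqP => E; apply: nvu; rewrite -E; apply: anc_par.
  exact: anc_anti (anc_up h1 pu) h3.
have hL := arc_anc huv; rewrite E in hL.
case: (v =P l (par v)) => [E2|nE].
  by rewrite -E2 eqxx in lv.
apply: (sib_nanc _ _ lr' hL); [by rewrite pl' | by apply/eqP => E3; apply: nE].
Qed.

Lemma arc_par2 u v w : ar u v -> ar v w -> anc (par u) (par v) /\ par u != par v.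
Proof.
move=> huv hvw; have [nuv nvu] := arc_nanc huv.
have h1 := arc_par huv.
have pu : par u != v by apply/eqP => E; apply: nvu; rewrite -E; apply: anc_par.
split; first exact: anc_up h1 pu.
apply/eqP => E.
have [ur lu pl lr _] := arc_info huv.
have [vr lv pl' lr' _] := arc_info hvw.
have hL := arc_anc huv; rewrite E in hL.
case: (v =P l (par v)) => [E2|nE]; first by rewrite -E2 eqxx in lv.
apply: (sib_nanc _ _ lr' hL); [by rewrite pl' | by apply/eqP => E3; apply: nE].
Qed.


Lemma hole_split H t : hole e H -> t \in H -> exists q0 q n' n,
  (forall z, (z \in H) = (z \in [:: t, n', q0 & rcons q n])) /\
      uniq [:: t, n', q0 & rcons q n] /\ next H t = n' /\ next H n' = q0 /\
      path (frel (next H)) q0 (rcons q n) /\ next H n = t.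
Proof.
move=> [U [sz hE]] tH; case: (rot_to tH) => i s Ers.
have U' : uniq (t :: s) by rewrite -Ers rot_uniq.
have sz' : 3 <= size s by move: sz; rewrite -(size_rot i) Ers.
have cyc : fcycle (next H) (t :: s).
  have := @cycle_next _ (rot i H); rewrite rot_uniq => /(_ U).
  have E : frel (next (rot i H)) =2 frel (next H) by move=> a b; rewrite /frel /= (next_rot _ U).
  by rewrite (eq_cycle E) Ers.
case: s sz' U' cyc Ers => [|n' [|q0 s2]] // sz' U' cyc Ers.
case/lastP: s2 sz' U' cyc Ers => [|q n] // sz' U' cyc Ers.
exists q0, q, n', n; move: cyc => /= /andP [/eqP ft /andP [/eqP fn' pc]].
move: pc; rewrite rcons_path => /andP [pq]; rewrite last_rcons => /eqP fn.
split; first by move=> z; rewrite -Ers mem_rot.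
by do !split.
Qed.

Lemma hole_next H a : hole e H -> a \in H -> e a (next H a).
Proof. by move=> [U [sz hE]] aH; rewrite hE ?mem_next // eqxx. Qed.

Lemma hole_adj H a b : hole e H -> a \in H -> b \in H -> e a b -> b = next H a \/ a = next H b.
Proof. by move=> [U [sz hE]] aH bH; rewrite hE // => /orP [/eqP|/eqP]; [left|right]. Qed.

Lemma hole_prev H a b : hole e H -> a = next H b -> b = prev H a.
Proof. by move=> [U _] ->; rewrite prev_next. Qed.

Lemma path_const (R : rel T) (P : T -> Prop) a s : path R a s ->
  (forall u w, u \in a :: s -> w \in a :: s -> R u w -> (P u <-> P w)) ->
  forall z, z \in a :: s -> (P z <-> P a).
Proof.
elim: s a => [|b s IH] a /=.
  by move=> _ _ z; rewrite inE => /eqP ->.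
move=> /andP [hab hp] hR z; rewrite in_cons => /orP [/eqP ->|zs]; first by [].
have hR' : forall u w, u \in b :: s -> w \in b :: s -> R u w -> (P u <-> P w).
  by move=> u w us ws; apply: hR; rewrite in_cons ?us ?ws orbT.
have h1 := IH b hp hR' z zs.
have h2 : P a <-> P b by apply: (hR a b) => //; rewrite ?in_cons ?eqxx ?orbT.
tauto.
Qed.

Lemma prop_path (R : rel T) t a s : t \in S -> path R a s ->
  (forall u w, u \in a :: s -> w \in a :: s -> R u w -> e u w) ->
  (forall z, z \in a :: s -> z != t) ->
  (forall z, z \in a :: s -> ~~ ar z t) ->
  forall z, z \in a :: s -> (anc t z <-> anc t a).
Proof.
move=> tS hp hR hnt har; apply: (path_const hp) => u w us ws Ruw.
have euw := hR _ _ us ws Ruw.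
split => h; first exact: (prop tS euw h (hnt _ us) (har _ ws)).
by apply: (prop tS _ h (hnt _ ws) (har _ us)); rewrite adjC.
Qed.


Lemma hole_S H a : hole e H -> a \in H -> a \in S.
Proof. by move=> hH aH; case: (adj_S (hole_next hH aH)). Qed.

Lemma antennaP H v : v \in H -> (forall z, z \in H -> ~ ar z v) -> antenna S c H v.
Proof.
move=> vH h; apply/andP; split => //; apply/forallP => z; apply/implyP => zH.
by apply/negP; apply: h.
Qed.
Lemma sinkP H v : v \in H -> (forall z, z \in H -> ~ ar v z) -> sink S c H v.
Proof.
move=> vH h; apply/andP; split => //; apply/forallP => z; apply/implyP => zH.
by apply/negP; apply: h.
Qed.
Lemma antenna_in H v : antenna S c H v -> v \in H.
Proof. by case/andP. Qed.
Lemma antenna_no H v z : antenna S c H v -> z \in H -> ~~ ar z v.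
Proof. by case/andP => _ /forallP /(_ z) /implyP h /h. Qed.
Lemma sink_in H v : sink S c H v -> v \in H.
Proof. by case/andP. Qed.
Lemma sink_no H v z : sink S c H v -> z \in H -> ~~ ar v z.
Proof. by case/andP => _ /forallP /(_ z) /implyP h /h. Qed.

Lemma dicho H t w : hole e H -> t \in H -> w \in H -> w != t -> anc t w ->
  [/\ ar (next H t) t, ar (prev H t) t, antenna S c H (next H t), antenna S c H (prev H t)
   & sink S c H t /\ forall z, z \in H -> z != next H t -> z != prev H t -> anc t z].
Proof.
move=> hH tH wH wt htw.
have U : uniq H by case: hH.
have [q0 [q [n' [n [Em [Uq [ft [fn' [pq fn]]]]]]]]] := hole_split hH tH.
have pt : prev H t = n by rewrite -fn prev_next.
rewrite ft pt.
have tS := hole_S hH tH.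
have inH : forall z, z \in q0 :: q -> z \in H.
  by move=> z; rewrite Em !in_cons mem_rcons in_cons => /orP [->|->]; rewrite ?orbT.
have nH : n \in H by rewrite Em !in_cons mem_rcons in_cons eqxx !orbT.
have n'H : n' \in H by rewrite Em !in_cons eqxx !orbT.
have [tL n'L [nQ _]] : [/\ t \notin n' :: rcons (q0 :: q) n, n' \notin rcons (q0 :: q) n
    & n \notin q0 :: q /\ uniq (q0 :: q)].
  have Uq' : uniq [:: t, n' & rcons (q0 :: q) n] by exact: Uq.
  move: Uq'; rewrite [uniq (t :: _)]cons_uniq [uniq (n' :: _)]cons_uniq rcons_uniq.
  by case/and4P => [-> -> -> ->].
have inQ : forall z, z \in q0 :: q -> [/\ z != t, z != n' & z != n].
  move=> z zq; have zL : z \in rcons (q0 :: q) n by rewrite mem_rcons in_cons zq orbT.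
  split; apply/eqP => E.
  - by move: tL; rewrite in_cons -E zL orbT.
  - by move: n'L; rewrite -E zL.
  - by move: nQ; rewrite -E zq.
have etn' : e t n' by rewrite -ft; apply: hole_next.
have ent : e n t by rewrite -fn; apply: hole_next.
have [_ ntn'] := adj_nanc etn'.
have [ntn _] := adj_nanc ent.
move: ntn' ntn => ntn' ntn.
have [nt'n' ntn2] : ~ anc t n' /\ ~ anc t n.
  by split => h; [case: (adj_nanc etn') => h1 _; apply: h1 | case: (adj_nanc ent) => _ h1; apply: h1].
have cls : forall z, z \in H -> [\/ z = t, z = n', z \in q0 :: q | z = n].
  move=> z; rewrite Em !in_cons mem_rcons in_cons.
  case/orP => [/eqP->|]; first by constructor 1.
  case/orP => [/eqP->|]; first by constructor 2.
  case/orP => [/eqP->|]; first by constructor 3; rewrite ?in_cons eqxx.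
  case/orP => [/eqP->|zq]; first by constructor 4.
  by constructor 3; rewrite ?in_cons zq orbT.
have wQ : w \in q0 :: q.
  case: (cls w wH) => // E; first by rewrite E eqxx in wt.
    by rewrite E in htw.
  by rewrite E in htw.
move: pq; rewrite rcons_path => /andP [pq /eqP fl].
have allQ : forall z, z \in q0 :: q -> anc t z.
  have := prop_path tS pq.
  have h1 : forall u w, u \in q0 :: q -> w \in q0 :: q -> frel (next H) u w -> e u w.
    by move=> u w' uq _ /eqP <-; apply: hole_next (inH _ uq).
  have h2 : forall z, z \in q0 :: q -> z != t by move=> z /inQ [].
  have h3 : forall z, z \in q0 :: q -> ~~ ar z t.
    move=> z zq; apply/negP => hz; have ezt : e t z by rewrite adjC /adj hz.
    have [z1 z2 z3] := inQ z zq.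
    case: (hole_adj hH tH (inH _ zq) ezt) => E.
      by rewrite E ft eqxx in z2.
    by rewrite (hole_prev hH E) pt eqxx in z3.
  move=> /(_ h1 h2 h3) hc z zq.
  by apply/(hc z zq)/(hc w wQ).
have q0Q : q0 \in q0 :: q by rewrite in_cons eqxx.
have lQ : last q0 q \in q0 :: q by apply: mem_last.
have [[an't an'q0] [ant anl]] : (ar n' t /\ ar n' q0) /\ (ar n t /\ ar n (last q0 q)).
  split.
    have eq0 : e q0 n' by rewrite adjC -fn'; apply: hole_next.
    case: (cross tS eq0 (allQ _ q0Q) nt'n') => // E.
    by case: (inQ _ q0Q); rewrite E eqxx.
  have el : e (last q0 q) n by rewrite -fl; apply: hole_next (inH _ lQ).
  case: (cross tS el (allQ _ lQ) ntn2) => // E.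
  by case: (inQ _ lQ); rewrite E eqxx.
split => //.
- apply: antennaP => // z zH hz.
  have ez : e z n' by rewrite /adj hz.
  case: (hole_adj hH zH n'H ez) => E.
    have E2 := hole_prev hH E; rewrite -ft prev_next // in E2.
    by move: (asym an't); rewrite -E2 hz.
  by move: (asym an'q0); rewrite -fn' -E hz.
- apply: antennaP => // z zH hz.
  have ez : e z n by rewrite /adj hz.
  case: (hole_adj hH zH nH ez) => E.
    have E2 := hole_prev hH E; rewrite -fl prev_next // in E2.
    by move: (asym anl); rewrite -E2 hz.
  by move: (asym ant); rewrite -fn -E hz.
split.
  apply: sinkP => // z zH hz.
  have ez : e t z by rewrite /adj hz.
  case: (hole_adj hH tH zH ez) => E.
    by move: (asym an't); rewrite -ft -E hz.
  have E2 := hole_prev hH E; rewrite pt in E2.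
  by move: (asym ant); rewrite -E2 hz.
move=> z zH zn' zn; case: (cls z zH) => [->| E | zq | E].
- exact: anc_refl.
- by rewrite E eqxx in zn'.
- exact: allQ.
- by rewrite E eqxx in zn.
Qed.


Lemma hole_neq H a : hole e H -> a \in H ->
  [/\ next H a != a, next H a != prev H a & next H (next H a) != a].
Proof.
move=> hH aH; have U : uniq H by case: hH.
have [q0 [q [n' [n [Em [Uq [ft [fn' [pq fn]]]]]]]]] := hole_split hH aH.
have pa : prev H a = n by rewrite -fn prev_next.
rewrite pa ft fn'.
move: Uq => /= /andP [h1 /andP [h2 _]].
split; apply/eqP => E.
- by move: h1; rewrite E in_cons eqxx.
- by move: h2; rewrite E in_cons mem_rcons in_cons eqxx orbT.
- by move: h1; rewrite -E !in_cons eqxx orbT.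
Qed.

Lemma ant_nb H a : hole e H -> antenna S c H a ->
  [/\ ar a (prev H a), ar a (next H a) &
      anc (prev H a) (next H a) \/ anc (next H a) (prev H a)].
Proof.
move=> hH aA; have aH := antenna_in aA; have U : uniq H by case: hH.
have p1H : prev H a \in H by rewrite mem_prev.
have p2H : next H a \in H by rewrite mem_next.
have h2 : ar a (next H a).
  have := hole_next hH aH; rewrite /adj => /orP [//|h].
  by move: (antenna_no aA p2H); rewrite h.
have h1 : ar a (prev H a).
  have := hole_next hH p1H; rewrite next_prev // /adj => /orP [h|//].
  by move: (antenna_no aA p1H); rewrite h.
split => //.
have [_ _ _ _ [s [bs cs ps]]] := arc_info h1.
have qs : next H a \in s by move: h2 => /and3P [_ _]; rewrite cs inE.
exact: br_cmp bs ps qs.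
Qed.

Lemma key_adj H t w u w2 a : hole e H -> t \in H -> w \in H -> w != t -> anc t w ->
  u \in H -> w2 \in H -> w2 != u -> anc u w2 -> a \in H ->
  (a = next H u \/ u = next H a) -> e t a.
Proof.
move=> hH tH wH wt htw uH w2H w2u huw aH ha.
have U : uniq H by case: hH.
have [_ _ _ _ [skt Dt]] := dicho hH tH wH wt htw.
have [anu apu _ _ [sku Du]] := dicho hH uH w2H w2u huw.
have h1 : t != next H u.
  by apply/eqP => E; move: (sink_no skt uH); rewrite -E in anu; rewrite anu.
have h2 : t != prev H u.
  by apply/eqP => E; move: (sink_no skt uH); rewrite -E in apu; rewrite apu.
have hut := Du t tH h1 h2.
have h3 : u != next H t.
  by apply/eqP => E; move: h2; rewrite (hole_prev hH E) eqxx.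
have h4 : u != prev H t.
  by apply/eqP => E; move: h1; rewrite E next_prev // eqxx.
have htu := Dt u uH h3 h4.
rewrite (anc_anti htu hut).
case: ha => ->; first exact: hole_next.
by rewrite adjC; apply: hole_next.
Qed.

Lemma piv_of H t w : hole e H -> t \in H -> w \in H -> w != t -> anc t w ->
  pivot par S c H t.
Proof.
move=> hH tH wH wt htw; have U : uniq H by case: hH.
have [ant apt annt anpt [skt Dt]] := dicho hH tH wH wt htw.
split => //; split.
  move=> a aA; have aH := antenna_in aA.
  have p1H : prev H a \in H by rewrite mem_prev.
  have p2H : next H a \in H by rewrite mem_next.
  have [_ _ hc] := ant_nb hH aA.
  have [_ neq _] := hole_neq hH aH.
  case: hc => hc.
    apply: (key_adj hH tH wH wt htw p1H p2H neq hc aH).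
    by left; rewrite next_prev.
  apply: (key_adj hH tH wH wt htw p2H p1H _ hc aH); first by rewrite eq_sym.
  by right.
move=> z zH nA; apply: Dt => //; apply/eqP => E; move: nA; rewrite E.
  by rewrite annt.
by rewrite anpt.
Qed.

Lemma nontriv_of_piv H t : hole e H -> pivot par S c H t ->
  exists w, [/\ w \in H, w != t & anc t w].
Proof.
move=> hH [skt [hA hD]]; have tH := sink_in skt.
have [n1 _ n2] := hole_neq hH tH.
have mH : next H t \in H by rewrite mem_next.
have wH : next H (next H t) \in H by rewrite mem_next.
case: (boolP (antenna S c H (next H (next H t)))) => hw.
  have h : ar (next H (next H t)) (next H t).
    have := hole_next hH mH; rewrite /adj => /orP [h|//].
    by move: (antenna_no hw mH); rewrite h.
  have nA : ~~ antenna S c H (next H t).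
    by apply/negP => hm; move: (antenna_no hm wH); rewrite h.
  by exists (next H t); split => //; apply: hD.
by exists (next H (next H t)); split => //; apply: hD.
Qed.

Lemma arc_parpar u v : ar u v -> anc (par u) (par v).
Proof.
move=> huv; have [nuv nvu] := arc_nanc huv.
have h1 := arc_par huv.
have pu : par u != v by apply/eqP => E; apply: nvu; rewrite -E; apply: anc_par.
exact: anc_up h1 pu.
Qed.

Lemma not_antenna H v : v \in H -> ~~ antenna S c H v -> exists2 u, u \in H & ar u v.
Proof.
move=> vH; rewrite /antenna vH /= => /forallPn [u]; rewrite negb_imply negbK => /andP [uH h].
by exists u.
Qed.

Lemma exist_nontriv H : hole e H -> exists t w, [/\ t \in H, w \in H, w != t & anc t w].
Proof.
move=> hH; have [U [sz _]] := hH.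
have [h0 h0H] : exists h0, h0 \in H by case: H sz {U hH} => // h0 H' _; exists h0; rewrite in_cons eqxx.
have [a aA] : exists a, antenna S c H a.
  case: (@arg_minnP T h0 (fun v => v \in H) (fun v => depth (par v)) h0H) => v vH vmin.
  case: (boolP (antenna S c H v)) => hv; first by exists v.
  have [u uH huv] := not_antenna vH hv.
  have Epar : par u = par v.
    apply/eqP/negPn/negP => ne.
    have := anc_depth (arc_parpar huv) ne; have := vmin u uH.
    by move=> h1 h2; move: (leq_ltn_trans h1 h2); rewrite ltnn.
  case: (boolP (antenna S c H u)) => hu; first by exists u.
  have [u' u'H hu'u] := not_antenna uH hu.
  have [h1 h2] := arc_par2 hu'u huv.
  have := anc_depth h1 h2; have := vmin u' u'H; rewrite Epar.
  by move=> h3 h4; move: (leq_ltn_trans h3 h4); rewrite ltnn.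
have aH := antenna_in aA.
have [_ neq _] := hole_neq hH aH.
have p1H : prev H a \in H by rewrite mem_prev.
have p2H : next H a \in H by rewrite mem_next.
have [_ _ [hc|hc]] := ant_nb hH aA.
  by exists (prev H a), (next H a); split.
by exists (next H a), (prev H a); split => //; rewrite eq_sym.
Qed.


Definition NT (H : seq T) z := exists w, [/\ w \in H, w != z & anc z w].

Definition DS (H1 H2 : seq T) x y : Prop :=
  [/\ hole e H1, hole e H2, ar x y, next H1 x = y & next H2 x = y] /\
  [/\ x \in H1, x \in H2, y \in H1 & y \in H2] /\
  (forall v, v \in H1 -> v \in H2 -> v = x \/ v = y) /\
  (forall a b, a \in S -> b \in S -> e a b ->
     ((a \in H1) && (b \in H1)) || ((a \in H2) && (b \in H2))).

Lemma DS_sym H1 H2 x y : DS H1 H2 x y -> DS H2 H1 x y.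
Proof.
move=> [[h1 h2 xy f1 f2] [[x1 x2 y1 y2] [I C]]]; split; first by split.
split; first by split.
split; first by move=> v v2 v1; apply: I.
by move=> a b aS bS eab; rewrite orbC; apply: C.
Qed.

Lemma cross_out H1 H2 x y a b : DS H1 H2 x y -> a \in H1 -> a \notin H2 -> b \in H2 ->
  e b a -> b = x \/ b = y.
Proof.
move=> [_ [_ [I C]]] aH1 aH2 bH2 eba; have [bS aS] := adj_S eba.
move: (C b a bS aS eba); rewrite (negbTE aH2) andbF orbF => /andP [bH1 _].
exact: I.
Qed.

Lemma hole_list H v : hole e H -> v \in H -> exists a s,
  [/\ forall z, (z \in H) = (z \in [:: v, a & s]), uniq [:: v, a & s] &
      path (frel (next H)) v (a :: s)].
Proof.
move=> hH vH; have [q0 [q [n' [n [Em [Uq [ft [fn' [pq fn]]]]]]]]] := hole_split hH vH.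
exists n', (q0 :: rcons q n); split => //; by rewrite /= ft fn' !eqxx pq.
Qed.

Lemma hole_prop_minus H v t : hole e H -> v \in H -> t \in S -> t \notin H ->
  (forall z, z \in H -> z != v -> ~~ ar z t) ->
  forall z1 z2, z1 \in H -> z2 \in H -> z1 != v -> z2 != v -> anc t z1 -> anc t z2.
Proof.
move=> hH vH tS tH har.
have [a [s [Em Uq pth]]] := hole_list hH vH.
move: Uq => /= /andP [vL Uq]; move: pth => /= /andP [_ pth].
have inL : forall z, z \in H -> z != v -> z \in a :: s.
  by move=> z; rewrite Em in_cons => /orP [/eqP ->|//]; rewrite eqxx.
have Lin : forall z, z \in a :: s -> z \in H /\ z != v.
  move=> z zL; split; first by rewrite Em in_cons zL orbT.
  by apply/eqP => E; move: vL; rewrite -E zL.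
have := prop_path tS pth.
have h1 : forall u w, u \in a :: s -> w \in a :: s -> frel (next H) u w -> e u w.
  by move=> u w' uL _ /eqP <-; apply: (hole_next hH); case: (Lin _ uL).
have h2 : forall z, z \in a :: s -> z != t.
  by move=> z /Lin [zH _]; apply/eqP => E; move: tH; rewrite -E zH.
have h3 : forall z, z \in a :: s -> ~~ ar z t by move=> z /Lin [zH zv]; apply: har.
move=> /(_ h1 h2 h3) hc z1 z2 z1H z2H z1v z2v h.
by apply/(hc z2 (inL _ z2H z2v))/(hc z1 (inL _ z1H z1v)).
Qed.

Lemma hole_prop_all H t : hole e H -> t \in S -> t \notin H ->
  (forall z, z \in H -> ~~ ar z t) ->
  forall z1 z2, z1 \in H -> z2 \in H -> anc t z1 -> anc t z2.
Proof.
move=> hH tS tH har z1 z2 z1H z2H h.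
have [a [s [Em Uq pth]]] := hole_list hH z1H.
have Lin : forall z, z \in [:: z1, a & s] -> z \in H by move=> z; rewrite Em.
have := prop_path tS pth.
have h1 : forall u w, u \in z1 :: a :: s -> w \in z1 :: a :: s -> frel (next H) u w -> e u w.
  by move=> u w' uL _ /eqP <-; apply: (hole_next hH); exact: Lin.
have h2 : forall z, z \in z1 :: a :: s -> z != t.
  by move=> z /Lin zH; apply/eqP => E; move: tH; rewrite -E zH.
have h3 : forall z, z \in z1 :: a :: s -> ~~ ar z t by move=> z /Lin zH; apply: har.
move=> /(_ h1 h2 h3) hc.
by apply/(hc z2 _); rewrite -?Em.
Qed.

Lemma out_cmp x a b : ar x a -> ar x b -> anc a b \/ anc b a.
Proof.
move=> ha hb; have [_ _ _ _ [s [bs cs as_]]] := arc_info ha.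
have bs' : b \in s by move: hb => /and3P [_ _]; rewrite cs inE.
exact: br_cmp bs as_ bs'.
Qed.

Lemma arc_neq u v : ar u v -> u != v.
Proof. move=> h; apply/eqP => E; have := asym h; move: h; rewrite E => h /negP; by apply. Qed.


Lemma sideB H1 H2 x y : DS H1 H2 x y -> NT H1 y ->
  [/\ ar x (prev H1 x), anc y (prev H1 x), prev H1 x \in H1, prev H1 x \notin H2
    & ~~ e y (prev H1 x)].
Proof.
move=> D [w [wH wy hyw]]; have [[h1 h2 xy f1 f2] [[xH1 xH2 yH1 yH2] [I C]]] := D.
have U1 : uniq H1 by case: h1.
have x1H : prev H1 x \in H1 by rewrite mem_prev.
have py : prev H1 y = x by rewrite -f1 prev_next.
have [a1n a1p an1 ap1 [sk1 D1]] := dicho h1 yH1 wH wy hyw.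
rewrite py in a1p ap1 D1.
have hxx1 : ar x (prev H1 x).
  have := hole_next h1 x1H; rewrite next_prev // /adj => /orP [h|//].
  by move: (antenna_no ap1 x1H); rewrite h.
have x1y : prev H1 x != y by have [_ neq _] := hole_neq h1 xH1; rewrite eq_sym -f1.
have x1x : prev H1 x != x by rewrite eq_sym; apply: arc_neq.
have x1n : prev H1 x != next H1 y.
  by apply/eqP => E; move: (antenna_no an1 xH1); rewrite -E hxx1.
have hy := D1 _ x1H x1n x1x.
split => //.
  by apply/negP => h; case: (I _ x1H h) => E; [move: x1x|move: x1y]; rewrite E eqxx.
apply/negP => eyx; case: (hole_adj h1 yH1 x1H eyx) => E.
  by move: x1n; rewrite E eqxx.
by move: (arc_neq xy); rewrite E next_prev // eqxx.
Qed.

Lemma partB_half H1 H2 x y : DS H1 H2 x y -> NT H1 y -> NT H2 y ->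
  anc (prev H1 x) (prev H2 x) -> False.
Proof.
move=> D n1 n2 h; have [[h1 h2 xy f1 f2] [[xH1 xH2 yH1 yH2] [I C]]] := D.
have [a1 b1 c1 d1 g1] := sideB D n1.
have [a2 b2 c2 d2 g2] := sideB (DS_sym D) n2.
have tS := hole_S h1 c1.
have har : forall z, z \in H2 -> z != x -> ~~ ar z (prev H1 x).
  move=> z zH zx; apply/negP => hz; have ez : e z (prev H1 x) by rewrite /adj hz.
  case: (cross_out D c1 d1 zH ez) => E; first by move: zx; rewrite E eqxx.
  by move: g1; rewrite -E ez.
have x2x : prev H2 x != x by apply/eqP => E; move: d2; rewrite E xH1.
have yx : y != x by rewrite eq_sym; apply: arc_neq.
have := hole_prop_minus h2 xH2 tS d1 har c2 yH2 x2x yx h => hx1y.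
have E := anc_anti hx1y b1; by move: d1; rewrite E yH2.
Qed.

Lemma partB H1 H2 x y : DS H1 H2 x y -> NT H1 y -> NT H2 y -> False.
Proof.
move=> D n1 n2.
have [a1 _ _ _ _] := sideB D n1.
have [a2 _ _ _ _] := sideB (DS_sym D) n2.
case: (out_cmp a1 a2) => h; first exact: partB_half D n1 n2 h.
exact: partB_half (DS_sym D) n2 n1 h.
Qed.

Lemma A_half H1 H2 x y : DS H1 H2 x y -> ar x (prev H1 x) -> ~ NT H1 y ->
  [/\ prev H1 x \notin H2, forall z, z \in H2 -> z != x -> anc (prev H1 x) z
    & ar x (prev H2 x)].
Proof.
move=> D hxx1 nNT; have [[h1 h2 xy f1 f2] [[xH1 xH2 yH1 yH2] [I C]]] := D.
have U1 : uniq H1 by case: h1.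
have U2 : uniq H2 by case: h2.
have x1H : prev H1 x \in H1 by rewrite mem_prev.
have x1y : prev H1 x != y by have [_ neq _] := hole_neq h1 xH1; rewrite eq_sym -f1.
have x1x : prev H1 x != x by rewrite eq_sym; apply: arc_neq.
have hx1y : anc (prev H1 x) y.
  case: (out_cmp xy hxx1) => // h; exfalso; apply: nNT.
  by exists (prev H1 x); split.
have yx1 : y != prev H1 x by rewrite eq_sym.
have [an ap ann anp [sk Dx]] := dicho h1 x1H yH1 yx1 hx1y.
have ynp : y != prev H1 (prev H1 x).
  by apply/eqP => E; move: (antenna_no anp xH1); rewrite -E xy.
have nx1 : prev H1 x \notin H2.
  by apply/negP => h; case: (I _ x1H h) => E; [move: x1x|move: x1y]; rewrite E eqxx.
have tS := hole_S h1 x1H.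
have har : forall z, z \in H2 -> z != x -> ~~ ar z (prev H1 x).
  move=> z zH zx; apply/negP => hz; have ez : e z (prev H1 x) by rewrite /adj hz.
  case: (cross_out D x1H nx1 zH ez) => E; first by move: zx; rewrite E eqxx.
  rewrite E in ez; case: (hole_adj h1 yH1 x1H ez) => E2.
    by move: ynp; rewrite (hole_prev h1 E2) eqxx.
  by move: (arc_neq xy); rewrite E2 next_prev // eqxx.
have yx : y != x by rewrite eq_sym; apply: arc_neq.
have allH2 : forall z, z \in H2 -> z != x -> anc (prev H1 x) z.
  by move=> z zH zx; apply: (hole_prop_minus h2 xH2 tS nx1 har yH2 zH yx zx hx1y).
split => //.
have x2H : prev H2 x \in H2 by rewrite mem_prev.
have x2x : prev H2 x != x.
  apply/eqP => E; have [n0 _ _] := hole_neq h2 xH2; move: n0.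
  by rewrite -{1}E next_prev // eqxx.
have ex2 : e (prev H2 x) x by have := hole_next h2 x2H; rewrite next_prev.
have [_ nx] := arc_nanc hxx1.
case: (cross tS ex2 (allH2 _ x2H x2x) nx) => [E|[_ //]].
by move: nx1; rewrite -E x2H.
Qed.

Lemma A_both H1 H2 x y : DS H1 H2 x y -> ar x (prev H1 x) -> ~ NT H1 y -> ~ NT H2 y -> False.
Proof.
move=> D hxx1 n1 n2; have [[h1 h2 xy f1 f2] [[xH1 xH2 yH1 yH2] [I C]]] := D.
have [nx1 all1 a2] := A_half D hxx1 n1.
have [nx2 all2 _] := A_half (DS_sym D) a2 n2.
have x1H : prev H1 x \in H1 by rewrite mem_prev.
have x2H : prev H2 x \in H2 by rewrite mem_prev.
have x1x : prev H1 x != x by rewrite eq_sym; apply: arc_neq.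
have x2x : prev H2 x != x by rewrite eq_sym; apply: arc_neq.
have E := anc_anti (all1 _ x2H x2x) (all2 _ x1H x1x).
by move: nx1; rewrite E x2H.
Qed.

Lemma B_half H1 H2 x y : DS H1 H2 x y -> ar (prev H1 x) x -> ~ NT H1 y ->
  exists p, [/\ p \in H1, p \notin H2 & forall z, z \in H2 -> anc p z].
Proof.
move=> D hx1x nNT; have [[h1 h2 xy f1 f2] [[xH1 xH2 yH1 yH2] [I C]]] := D.
have U1 : uniq H1 by case: h1.
have x1H : prev H1 x \in H1 by rewrite mem_prev.
have [t [w [tH wH wt htw]]] := exist_nontriv h1.
have [ant apt annt anpt [skt Dt]] := dicho h1 tH wH wt htw.
have xnA : ~~ antenna S c H1 x.
  by apply/negP => h; move: (antenna_no h x1H); rewrite hx1x.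
have ynA : ~~ antenna S c H1 y.
  by apply/negP => h; move: (antenna_no h xH1); rewrite xy.
have nb : forall z, z \in H1 -> ~~ antenna S c H1 z -> z != next H1 t /\ z != prev H1 t.
  move=> z zH zA; split; apply/eqP => E; move: zA; rewrite E ?annt ?anpt //.
have htx : anc t x by have [n1 n2] := nb _ xH1 xnA; apply: Dt.
have ty : t != y by apply/eqP => E; apply: nNT; exists w; rewrite -E.
have tx : t != x by apply/eqP => E; move: (sink_no skt yH1); rewrite E xy.
have tn2 : t \notin H2.
  by apply/negP => h; case: (I _ tH h) => E; [move: tx|move: ty]; rewrite E eqxx.
have tS := hole_S h1 tH.
have har : forall z, z \in H2 -> ~~ ar z t.
  move=> z zH; apply/negP => hz; have ez : e z t by rewrite /adj hz.
  have zH1 : z \in H1 by case: (cross_out D tH tn2 zH ez) => ->.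
  have zA : ~~ antenna S c H1 z by case: (cross_out D tH tn2 zH ez) => ->.
  have [z1 z2] := nb _ zH1 zA.
  case: (hole_adj h1 zH1 tH ez) => E.
    by move: z2; rewrite (hole_prev h1 E) eqxx.
  by move: z1; rewrite E eqxx.
exists t; split => // z zH.
exact: (hole_prop_all h2 tS tn2 har xH2 zH htx).
Qed.

Lemma partA H1 H2 x y : DS H1 H2 x y -> NT H1 y \/ NT H2 y.
Proof.
move=> D; have [[h1 h2 xy f1 f2] [[xH1 xH2 yH1 yH2] [I C]]] := D.
apply: NNPP => hn.
have n1 : ~ NT H1 y by move=> h; apply: hn; left.
have n2 : ~ NT H2 y by move=> h; apply: hn; right.
have U1 : uniq H1 by case: h1.
have U2 : uniq H2 by case: h2.
have x1H : prev H1 x \in H1 by rewrite mem_prev.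
have x2H : prev H2 x \in H2 by rewrite mem_prev.
have e1 : e (prev H1 x) x by have := hole_next h1 x1H; rewrite next_prev.
have e2 : e (prev H2 x) x by have := hole_next h2 x2H; rewrite next_prev.
case/orP: e1 => [a1|a1]; last exact: A_both D a1 n1 n2.
case/orP: e2 => [a2|a2]; last exact: A_both (DS_sym D) a2 n2 n1.
have [p1 [p1H p1n all1]] := B_half D a1 n1.
have [p2 [p2H p2n all2]] := B_half (DS_sym D) a2 n2.
have E := anc_anti (all1 _ p2H) (all2 _ p1H).
by move: p1n; rewrite E p2H.
Qed.

Lemma main_half H1 H2 x y : DS H1 H2 x y -> NT H1 y ->
  pivot par S c H1 y /\ subordinate par S c H2 y.
Proof.
move=> D n1; have [[h1 h2 xy f1 f2] [[xH1 xH2 yH1 yH2] [I C]]] := D.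
have [w [wH wy hyw]] := n1.
split; first exact: piv_of h1 yH1 wH wy hyw.
split => //; split.
  move=> hp; have [w2 [w2H w2y hw2]] := nontriv_of_piv h2 hp.
  by apply: (partB D n1); exists w2.
by apply/negP => h; move: (antenna_no h xH2); rewrite xy.
Qed.

Lemma main_DS H1 H2 x y : DS H1 H2 x y ->
  (pivot par S c H1 y /\ subordinate par S c H2 y) \/
  (pivot par S c H2 y /\ subordinate par S c H1 y).
Proof.
move=> D; case: (partA D) => h; first by left; apply: main_half D h.
by right; apply: main_half (DS_sym D) h.
Qed.


Lemma hole_rev H : hole e H -> hole e (rev H).
Proof.
move=> [U [sz hE]]; split; first by rewrite rev_uniq.
split; first by rewrite size_rev.
move=> a b; rewrite !mem_rev => aH bH; rewrite hE // !(next_rev U).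
have E1 : forall u v, (v == prev H u) = (u == next H v).
  by move=> u v; apply/eqP/eqP => [->|->]; rewrite ?next_prev ?prev_next.
by rewrite !E1 orbC.
Qed.

Lemma antenna_mem (H H' : seq T) v : H =i H' -> antenna S c H v = antenna S c H' v.
Proof.
move=> E; rewrite /antenna E; congr (_ && _); apply: eq_forallb => w; by rewrite E.
Qed.
Lemma sink_mem (H H' : seq T) v : H =i H' -> sink S c H v = sink S c H' v.
Proof.
move=> E; rewrite /sink E; congr (_ && _); apply: eq_forallb => w; by rewrite E.
Qed.
Lemma pivot_mem (H H' : seq T) z : H =i H' -> pivot par S c H z -> pivot par S c H' z.
Proof.
move=> E [sk [hA hD]]; split; first by rewrite -(sink_mem z E).
split; first by move=> a; rewrite -(antenna_mem a E); apply: hA.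
by move=> w; rewrite -E -(antenna_mem w E); apply: hD.
Qed.
Lemma subord_mem (H H' : seq T) z : H =i H' -> subordinate par S c H z -> subordinate par S c H' z.
Proof.
move=> E [zH [np na]]; split; first by rewrite -E.
split; last by rewrite -(antenna_mem z E).
move=> hp; apply: np; apply: pivot_mem hp => u; by rewrite E.
Qed.

Lemma orient H x y : hole e H -> x \in H -> y \in H -> e x y ->
  exists H', [/\ hole e H', H' =i H & next H' x = y].
Proof.
move=> hH xH yH exy; have U : uniq H by case: hH.
case: (hole_adj hH xH yH exy) => E.
  by exists H; split.
exists (rev H); split; first exact: hole_rev.
  by move=> u; rewrite mem_rev.
by rewrite (next_rev U) E prev_next.
Qed.

Lemma final_arc H1 H2 x y : hole e H1 -> hole e H2 ->
  x \in H1 -> y \in H1 -> x \in H2 -> y \in H2 ->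
  (forall v, v \in H1 -> v \in H2 -> (v == x) || (v == y)) ->
  (forall a b, a \in S -> b \in S -> e a b ->
     ((a \in H1) && (b \in H1)) || ((a \in H2) && (b \in H2))) ->
  ar x y ->
  (pivot par S c H1 y /\ subordinate par S c H2 y) \/
  (pivot par S c H2 y /\ subordinate par S c H1 y).
Proof.
move=> h1 h2 xH1 yH1 xH2 yH2 I C xy.
have exy : e x y by rewrite /adj xy.
have [H1' [h1' E1 f1]] := orient h1 xH1 yH1 exy.
have [H2' [h2' E2 f2]] := orient h2 xH2 yH2 exy.
have D : DS H1' H2' x y.
  split; first by split.
  split; first by rewrite !E1 !E2.
  split.
    by move=> v; rewrite E1 E2 => v1 v2; case/orP: (I v v1 v2) => /eqP ->; [left|right].
  by move=> a b aS bS eab; rewrite !E1 !E2; apply: C.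
case: (main_DS D) => [[p s]|[p s]].
  left; split; [apply: pivot_mem p | apply: subord_mem s] => u; by rewrite ?E1 ?E2.
right; split; [apply: pivot_mem p | apply: subord_mem s] => u; by rewrite ?E1 ?E2.
Qed.

End Aux.

Theorem lemma6p3 (T : finType) (r : T) (par l : T -> T) (c : T -> {set T})
    (S : {set T}) (H1 H2 : seq T) (x y : T) :
  burling_tree r par l c ->
  domino S (adj S c) H1 H2 x y ->
  exists2 z, (z == x) || (z == y) &
    (pivot par S c H1 z /\ subordinate par S c H2 z) \/
    (pivot par S c H2 z /\ subordinate par S c H1 z).
Proof.
move=> Hb [h1 [h2 [xy [exy [I [xH1 [yH1 [xH2 [yH2 [ES C]]]]]]]]]].
case/orP: exy => a.
  exists y; first by rewrite eqxx orbT.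
  exact: (final_arc Hb h1 h2 xH1 yH1 xH2 yH2 I C a).
exists x; first by rewrite eqxx.
apply: (final_arc Hb h1 h2 yH1 xH1 yH2 xH2 _ C a).
by move=> v v1 v2; rewrite orbC; apply: I.
Qed.
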